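(* Let $M$ be a system execution satisfying the Lazy Set axioms A0, A1, A2, and let $\Rightarrow$ be the relation defined in the context. Then the relation $<'\;=\;(<\cup\Rightarrow)$ (i.e. $a<'b$ iff $a<b$ or $a\Rightarrow b$) contains no cycles: there is no sequence of events $X_0<'X_1<'\cdots<'X_n$ with $n\ge1$ and $X_0=X_n$.
   Context: A system execution $M$ consists of: a set of events, partitioned into low-level events (actions) and high-level events; unary predicates $\mathrm{Add},\mathrm{Rem},\mathrm{Cnt}$ on events; a partial order $<$ on events in which every event has finitely many predecessors (and Lamport's finiteness property: for every event $x$ there is a finite set $E$ with $x<y$ for all events $y\notin E$); functions $\mathrm{Begin},\mathrm{End}$ from events to actions with $\mathrm{Begin}(e)=\mathrm{End}(e)=e$ for actions $e$; functions $\chi$ (events $\to\{0,1,f\}$), $\mathrm{val}$ (events $\to\mathbb N$), $\gamma$ (events $\to$ events). For events $X,Y$, $X<Y$ iff $\mathrm{End}(X)<\mathrm{Begin}(Y)$. Notation: $\mathrm{Add}^p(a)$ abbreviates $\mathrm{Add}(a)\wedge\chi(a)=p$, similarly $\mathrm{Rem}^p,\mathrm{Cnt}^p$; $\mathrm{Op}^p(a)$ abbreviates $(\mathrm{Add}(a)\vee\mathrm{Rem}(a)\vee\mathrm{Cnt}(a))\wedge\chi(a)=p$ for $p\in\{0,1\}$. A0: $\mathrm{Add},\mathrm{Rem},\mathrm{Cnt}$ pairwise disjoint; $\mathrm{Add},\mathrm{Rem}$ events are actions, $\mathrm{Cnt}$ events are high-level; $\mathrm{Begin}(X),\mathrm{End}(X)$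 are actions; for $\mathrm{Cnt}$ events $E$, $\mathrm{Begin}(E)<\mathrm{End}(E)$; $<$ restricted to actions is linear. A1: for every $A$ with $\mathrm{Op}^1(A)$: $\mathrm{Add}^0(\gamma(A))$, $\mathrm{val}(\gamma(A))=\mathrm{val}(A)$, $\gamma(A)<\mathrm{End}(A)$, and no $R$ has $\mathrm{Rem}^1(R)$, $\gamma(R)=\gamma(A)$, $\gamma(A)<R<A$. A2: if $\mathrm{Op}^0(B)$, $\mathrm{Add}^0(A)$, $A<B$, $\mathrm{val}(A)=\mathrm{val}(B)$, then some $R$ has $\mathrm{Rem}^1(R)$, $A=\gamma(R)$, $R<\mathrm{End}(B)$. The relation $\Rightarrow$ on events holds exactly in the following cases: (1) for every $\mathrm{Cnt}^1$ event $C$: $\gamma(C)\Rightarrow C$, and $C\Rightarrow R$ for every $R$ with $\mathrm{Rem}^1(R)$ and $\gamma(R)=\gamma(C)$; (2) $R\Rightarrow C$ whenever $\mathrm{Cnt}^0(C)$, $\mathrm{Rem}^1(R)$, $\mathrm{val}(R)=\mathrm{val}(C)$, not $C<R$, and $\gamma(R)<C$; (3) $C\Rightarrow A$ whenever $\mathrm{Cnt}^0(C)$, $\mathrm{Add}^0(A)$, $\mathrm{val}(C)=\mathrm{val}(A)$ and not $A<C$. *)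

(* Defs.v *)
From Stdlib Require Import List Arith.

Inductive chival : Type := c0 | c1 | cf.

Record SysExec : Type := {
  Ev : Type;
  Act : Ev -> Prop;               (* low-level events (actions); the others are high-level *)
  Add : Ev -> Prop;
  Rem : Ev -> Prop;
  Cnt : Ev -> Prop;
  lt : Ev -> Ev -> Prop;
  Begin : Ev -> Ev;
  End : Ev -> Ev;
  chi : Ev -> chival;
  val : Ev -> nat;
  gamma : Ev -> Ev
}.

Section LazySet.
Variable M : SysExec.
Local Notation E := (Ev M).
Local Notation "x < y" := (lt M x y).

Definition system_execution : Prop :=
  (forall x, ~ x < x) /\
  (forall x y z, x < y -> y < z -> x < z) /\
  (forall x, exists l : list E, forall y, y < x -> In y l) /\
  (forall x, exists l : list E, forall y, ~ In y l -> x < y) /\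
  (forall e, Act M e -> Begin M e = e /\ End M e = e) /\
  (forall X Y, X < Y <-> End M X < Begin M Y).

Definition AddP p a := Add M a /\ chi M a = p.
Definition RemP p a := Rem M a /\ chi M a = p.
Definition CntP p a := Cnt M a /\ chi M a = p.
Definition OpP p a := (Add M a \/ Rem M a \/ Cnt M a) /\ chi M a = p.

Definition A0 : Prop :=
  (forall a, ~ (Add M a /\ Rem M a)) /\
  (forall a, ~ (Add M a /\ Cnt M a)) /\
  (forall a, ~ (Rem M a /\ Cnt M a)) /\
  (forall a, Add M a -> Act M a) /\
  (forall a, Rem M a -> Act M a) /\
  (forall a, Cnt M a -> ~ Act M a) /\
  (forall X, Act M (Begin M X) /\ Act M (End M X)) /\
  (forall e, Cnt M e -> Begin M e < End M e) /\
  (forall a b, Act M a -> Act M b -> a < b \/ a = b \/ b < a).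

Definition A1 : Prop :=
  forall A, OpP c1 A ->
    AddP c0 (gamma M A) /\ val M (gamma M A) = val M A /\
    gamma M A < End M A /\
    ~ (exists R, RemP c1 R /\ gamma M R = gamma M A /\
                 gamma M A < R /\ R < A).

Definition A2 : Prop :=
  forall A B, OpP c0 B -> AddP c0 A -> A < B -> val M A = val M B ->
    exists R, RemP c1 R /\ A = gamma M R /\ R < End M B.

Definition arrow (a b : E) : Prop :=
  (CntP c1 b /\ a = gamma M b) \/
  (CntP c1 a /\ RemP c1 b /\ gamma M b = gamma M a) \/
  (CntP c0 b /\ RemP c1 a /\ val M a = val M b /\ ~ b < a /\ gamma M a < b) \/
  (CntP c0 a /\ AddP c0 b /\ val M a = val M b /\ ~ b < a).

Definition ltp (a b : E) : Prop := a < b \/ arrow a b.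

End LazySet.

(* Main.v *)
Require Import Defs.
From Stdlib Require Import List Arith.
From Stdlib Require Import Classical ClassicalEpsilon Lia.

Lemma list_max (T:Type) (lt: T->T->Prop) (P:T->Prop)
  (Htr: forall x y z, lt x y -> lt y z -> lt x z)
  (Hlin: forall x y, P x -> P y -> lt x y \/ x = y \/ lt y x) :
  forall l, (exists x, P x /\ In x l) ->
  exists m, P m /\ forall y, P y -> In y l -> lt y m \/ y = m.
Proof.
  induction l as [|a l IH]; intros [x [Px Hx]].
  - destruct Hx.
  - destruct (classic (exists x, P x /\ In x l)) as [Hl|Hl].
    + destruct (IH Hl) as [m [Pm Hm]].
      destruct (classic (P a)) as [Pa|Pa].
      * destruct (Hlin a m Pa Pm) as [H|[H|H]].
        -- exists m; split; auto. intros y Py [<-|Hy]; auto.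
        -- exists m; split; auto. intros y Py [<-|Hy]; auto.
        -- exists a; split; auto. intros y Py [<-|Hy]; auto.
           destruct (Hm y Py Hy) as [H1| ->]; eauto.
      * exists m; split; auto. intros y Py [<-|Hy]; [contradiction|auto].
    + destruct Hx as [<-|Hx]; [|exfalso; eauto].
      exists a; split; auto. intros y Py [<-|Hy]; auto.
      exfalso; eauto.
Qed.

Definition qlt (M : SysExec) (p q : Ev M * nat) : Prop :=
  lt M (fst p) (fst q) \/ (fst p = fst q /\ snd p < snd q).

Definition Q (M : SysExec) (X : Ev M) (q : Ev M * nat) : Prop :=
 (lt M (Begin M X) (fst q) \/ Begin M X = fst q) /\
 (lt M (fst q) (End M X) \/ fst q = End M X) /\
 (Act M X -> q = (X,1)) /\
 (CntP M c1 X -> qlt M (gamma M X,1) q /\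
    forall R, RemP M c1 R -> gamma M R = gamma M X -> qlt M q (R,1)) /\
 (CntP M c0 X ->
    (forall R, RemP M c1 R -> val M R = val M X -> ~ lt M X R ->
        lt M (gamma M R) X -> qlt M (R,1) q) /\
    (forall A, AddP M c0 A -> val M X = val M A -> ~ lt M A X -> qlt M q (A,1))).

Lemma exQ (M : SysExec) :
  system_execution M -> A0 M -> A1 M -> A2 M -> forall X, exists q, Q M X q.
Proof.
  intros [Hirr [Htr [Hpred [Hlam [Hact Hiff]]]]]
         [D1 [D2 [D3 [AddAct [RemAct [CntNAct [BEAct [CntBE Hlin]]]]]]]] HA1 HA2 X.
  assert (BleE : lt M (Begin M X) (End M X) \/ Begin M X = End M X).
  { destruct (BEAct X) as [HB HE].
    destruct (Hlin _ _ HB HE) as [H|[H|H]]; auto.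
    exfalso. apply (Hirr X). apply Hiff. exact H. }
  destruct (classic (Act M X)) as [HX|HX].
  { exists (X,1). unfold Q; simpl. destruct (Hact X HX) as [HB HE]. simpl. rewrite HB, HE.
    split; [auto|split;[auto|split;[auto|split]]].
    - intros [HC _]. exfalso; exact (CntNAct X HC HX).
    - intros [HC _]. exfalso; exact (CntNAct X HC HX). }
  destruct (classic (CntP M c1 X)) as [HC1|HC1].
  { destruct (HA1 X (conj (or_intror (or_intror (proj1 HC1))) (proj2 HC1)))
      as [[GAdd Gc] [Gval [GE GnR]]].
    assert (GAct : Act M (gamma M X)) by auto.
    assert (GA : Act M (gamma M X)) by auto.
    assert (HR : forall R, RemP M c1 R -> gamma M R = gamma M X ->
                 lt M (gamma M X) R /\ ~ lt M R X).
    { intros R [HRr HRc] HRg.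
      destruct (HA1 R (conj (or_intror (or_introl HRr)) HRc)) as [_ [_ [HgR _]]].
      rewrite (proj2 (Hact R (RemAct R HRr))) in HgR. rewrite HRg in HgR.
      split; auto. intro HRX. apply GnR. exists R. repeat split; auto. }
    destruct (BEAct X) as [HBa HEa].
    destruct (classic (lt M (gamma M X) (Begin M X))) as [Hg|Hg].
    - exists (Begin M X, 0). unfold Q; simpl. split;[auto|split;[auto|split;[tauto|split]]].
      + intros _. split. left; simpl; auto.
        intros R HRr HRg. destruct (HR R HRr HRg) as [H1 H2].
        assert (RA : Act M R) by (apply RemAct; apply HRr).
        destruct (Hlin _ _ HBa RA) as [H|[H|H]].
        * left; simpl; auto.
        * right; simpl; auto.
        * exfalso. apply H2. apply Hiff. rewrite (proj2 (Hact R RA)). exact H.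
      + intros [_ Hc]. rewrite (proj2 HC1) in Hc. discriminate.
    - exists (gamma M X, 2). unfold Q; simpl.
      split;[|split;[|split;[tauto|split]]].
      + destruct (Hlin _ _ HBa GA) as [H|[H|H]]; auto. contradiction.
      + auto.
      + intros _. split. right; simpl; auto.
        intros R HRr HRg. destruct (HR R HRr HRg) as [H1 H2]. left; simpl; auto.
      + intros [_ Hc]. rewrite (proj2 HC1) in Hc. discriminate. }
  destruct (classic (CntP M c0 X)) as [HC0|HC0].
  { destruct (BEAct X) as [HBa HEa].
    set (S := fun R => RemP M c1 R /\ val M R = val M X /\ ~ lt M X R /\
                       lt M (gamma M R) X).
    set (T := fun A => AddP M c0 A /\ val M X = val M A /\ ~ lt M A X).
    assert (SAct : forall R, S R -> Act M R).
    { intros R [[H _] _]; auto. }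
    assert (SleE : forall R, S R -> lt M R (End M X) \/ R = End M X).
    { intros R HS. destruct (Hlin _ _ (SAct R HS) HEa) as [H|[H|H]]; auto.
      exfalso. pose proof (proj1 (Hact R (SAct R HS))) as HBR.
      destruct HS as [_ [_ [H3 _]]]. apply H3. apply Hiff.
      rewrite HBR. exact H. }
    assert (TAct : forall A, T A -> Act M A).
    { intros A [[H _] _]; auto. }
    assert (TgeB : forall A, T A -> lt M (Begin M X) A \/ Begin M X = A).
    { intros A HT. destruct (Hlin _ _ HBa (TAct A HT)) as [H|[H|H]]; auto.
      exfalso. pose proof (proj2 (Hact A (TAct A HT))) as HEA.
      destruct HT as [_ [_ H3]]. apply H3. apply Hiff.
      rewrite HEA. exact H. }
    assert (ST : forall R A, S R -> T A -> lt M R A).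
    { intros R A HS HT.
      pose proof HS as [[HRr HRc] [HRv [HnXR HgX]]].
      pose proof HT as [[HAa HAc] [HAv HnAX]].
      destruct (HA1 R (conj (or_intror (or_introl HRr)) HRc))
        as [[GAdd Gc] [Gval [GE GnR]]].
      assert (GAct : Act M (gamma M R)) by auto.
      apply Hiff in HgX. rewrite (proj2 (Hact _ GAct)) in HgX.
      assert (HgA : lt M (gamma M R) A).
      { destruct (TgeB A HT) as [H| <-]; eauto. }
      destruct (Hlin _ _ (SAct R HS) (TAct A HT)) as [H|[H|H]]; auto.
      - exfalso. subst. apply (D1 A). split; auto.
      - exfalso.
        destruct (HA2 (gamma M R) A (conj (or_introl HAa) HAc) (conj GAdd Gc) HgA)
          as [R' [[HR'r HR'c] [HR'g HR'E]]].
        { congruence. }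
        rewrite (proj2 (Hact A (TAct A HT))) in HR'E.
        apply GnR. exists R'. split; [split; auto|split; [auto|split]].
        + destruct (HA1 R' (conj (or_intror (or_introl HR'r)) HR'c)) as [_ [_ [H4 _]]].
          rewrite (proj2 (Hact R' (RemAct R' HR'r))) in H4. rewrite <- HR'g in H4.
          exact H4.
        + eauto. }
    destruct (classic (exists R, S R /\ (lt M (Begin M X) R \/ Begin M X = R)))
      as [[R0 [HS0 HB0]]|HnS].
    - destruct (Hpred (End M X)) as [l Hl].
      assert (Sin : forall R, S R -> In R (End M X :: l)).
      { intros R HS. destruct (SleE R HS) as [H|H]; simpl;
          [right; apply Hl; exact H| left; symmetry; exact H]. }
      destruct (list_max _ (lt M) S Htr
                  (fun x y Hx Hy => Hlin x y (SAct x Hx) (SAct y Hy))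
                  (End M X :: l)) as [m [Sm Hm]].
      { exists R0. split; [auto|apply Sin; auto]. }
      exists (m, 2). unfold Q; simpl.
      split;[|split;[|split;[tauto|split]]].
      + destruct (Hm R0 HS0) as [H| <-].
        * apply Sin; auto.
        * destruct HB0 as [H1| <-]; eauto.
        * auto.
      + apply SleE; auto.
      + intros [_ Hc]. rewrite (proj2 HC0) in Hc. discriminate.
      + intros _. split.
        * intros R H1 H2 H3 H4.
          assert (HS : S R) by (repeat split; auto; apply H1).
          destruct (Hm R HS) as [H| <-].
          { apply Sin; auto. }
          { left; simpl; auto. }
          { right; simpl; auto. }
        * intros A H1 H2 H3. left. simpl. apply ST; auto. unfold T; auto.
    - exists (Begin M X, 0). unfold Q; simpl.
      split;[auto|split;[auto|split;[tauto|split]]].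
      + intros [_ Hc]. rewrite (proj2 HC0) in Hc. discriminate.
      + intros _. split.
        * intros R H1 H2 H3 H4.
          assert (HS : S R) by (repeat split; auto; apply H1).
          destruct (Hlin _ _ (SAct R HS) HBa) as [H|[H|H]].
          { left; simpl; auto. }
          { exfalso; apply HnS; exists R; split; auto. }
          { exfalso; apply HnS; exists R; split; auto. }
        * intros A H1 H2 H3.
          assert (HT : T A) by (repeat split; auto; apply H1).
          destruct (TgeB A HT) as [H|H].
          { left; simpl; auto. }
          { right; simpl; auto. } }
  exists (Begin M X, 1). unfold Q; simpl.
  split;[auto|split;[auto|split;[tauto|split;[tauto|tauto]]]].
Qed.

Theorem theorem3p8 (M : SysExec) :
  system_execution M -> A0 M -> A1 M -> A2 M ->
  ~ (exists (n : nat) (X : nat -> Ev M),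
        1 <= n /\ X 0 = X n /\
        (forall i, i < n -> ltp M (X i) (X (S i)))).
Proof.
  intros Hse H0 H1 H2 [n [X [Hn [H0n Hi]]]].
  pose proof (exQ M Hse H0 H1 H2) as HQ.
  set (p := fun Y => proj1_sig (constructive_indefinite_description _ (HQ Y))).
  assert (Hp : forall Y, Q M Y (p Y)).
  { intro Y. unfold p. apply proj2_sig. }
  destruct Hse as [Hirr [Htr [Hpred [Hlam [Hact Hiff]]]]].
  destruct H0 as [D1 [D2 [D3 [AddAct [RemAct [CntNAct [BEAct [CntBE Hlin]]]]]]]].
  assert (qtr : forall a b c, qlt M a b -> qlt M b c -> qlt M a c).
  { unfold qlt. intros a b c [H|[H H']] [K|[K K']].
    - left; eauto.
    - left; congruence.
    - left; congruence.
    - right; split; [congruence| lia]. }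
  assert (mono : forall a b, ltp M a b -> qlt M (p a) (p b)).
  { intros a b [Hab|Har].
    - left. destruct (Hp a) as [_ [Ha _]]. destruct (Hp b) as [Hb _].
      apply Hiff in Hab.
      destruct Ha as [Ha| ->]; destruct Hb as [Hb| <-]; eauto.
    - destruct Har as [[HC Hg]|[[HC [HR Hg]]|[[HC [HR [Hv [Hn1 Hg]]]]|[HC [HA [Hv Hn1]]]]]].
      + destruct (H1 b (conj (or_intror (or_intror (proj1 HC))) (proj2 HC)))
          as [[GAdd _] _].
        subst a. destruct (Hp (gamma M b)) as [_ [_ [Hact' _]]].
        rewrite (Hact' (AddAct _ GAdd)).
        destruct (Hp b) as [_ [_ [_ [Hc1 _]]]]. exact (proj1 (Hc1 HC)).
      + destruct (Hp b) as [_ [_ [Hact' _]]].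
        rewrite (Hact' (RemAct _ (proj1 HR))).
        destruct (Hp a) as [_ [_ [_ [Hc1 _]]]]. exact (proj2 (Hc1 HC) b HR Hg).
      + destruct (Hp a) as [_ [_ [Hact' _]]].
        rewrite (Hact' (RemAct _ (proj1 HR))).
        destruct (Hp b) as [_ [_ [_ [_ Hc0]]]]. exact (proj1 (Hc0 HC) a HR Hv Hn1 Hg).
      + destruct (Hp b) as [_ [_ [Hact' _]]].
        rewrite (Hact' (AddAct _ (proj1 HA))).
        destruct (Hp a) as [_ [_ [_ [_ Hc0]]]]. exact (proj2 (Hc0 HC) b HA Hv Hn1). }
  assert (Hk : forall k, 1 <= k -> k <= n -> qlt M (p (X 0)) (p (X k))).
  { induction k as [|k IH]; intros Hk1 Hk2; [lia|].
    destruct k as [|k].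
    - apply mono, Hi; lia.
    - apply qtr with (p (X (S k))); [apply IH; lia| apply mono, Hi; lia]. }
  specialize (Hk n Hn (le_n n)). rewrite <- H0n in Hk.
  destruct Hk as [H|[_ H]]; [eapply Hirr; eauto| lia].
Qed.
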